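(* Under the setting below, let $(x^*,z^*,s^* )$ with multiplier $\lambda^*$ for (C) (and nonnegative multipliers for the other constraints) be a KKT point of (P). Then for every $t$ with $(\beta_t,\theta_t)\in\Omega^{III}_t(\lambda^* )$ we have $(x_t^*,z_t^* )=(x^{III}_t(\lambda^* ),z^{III}_t(\lambda^* ))$, where $x^{III}_t(\lambda)=u_t'^{-1}\big(X_t(\lambda)/\theta_t\big)$, $z^{III}_t(\lambda)=x^{III}_t(\lambda)-a_t(\beta_t,\lambda)$, and $\Omega^{III}_t(\lambda)=\Big\{(\beta,\theta):\beta>0,\ \frac{X_t(\lambda)}{u_t'(a_t(\beta,\lambda))}\le\theta\le\frac{X_t(\lambda)}{u_t'(1)}\Big\}$.
   Context: Fix an integer $T\ge 1$, a data cap $Q>0$ and an overage fee $\pi>0$. For each $t\in\{1,\dots,T\}$ fix reals $d_t\ge 0$, $r_t\ge 0$, $c_t>0$, $p_t>0$, $\theta_t>0$, $\beta_t>0$ and functions $u_t,e_t:[0,\infty)\to\mathbb{R}$ such that: $u_t$ is continuous, increasing and strictly concave, differentiable on $(0,\infty)$, and $u_t':(0,\infty)\to(0,\infty)$ is a strictly decreasing bijection with inverse $u_t'^{-1}$; $e_t$ is increasing, strictly convex and continuously differentiable, and $e_t':[0,\infty)\to[0,\infty)$ is a strictly increasing bijection with inverse $e_t'^{-1}$. For $0\le z\le x\le 1$ let $\tilde f_t(x,z)=\theta_t u_t(x)-\beta_t e_t((x-z)c_t)-p_t c_t z$ and $\tilde h_t(x,z)=d_t x+r_t z$. Problem (P):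 maximize $\sum_{t=1}^T \tilde f_t(x_t,z_t)-\pi s$ over $x,z\in\mathbb{R}^T$, $s\in\mathbb{R}$, subject to $0\le z_t\le x_t\le 1$ for all $t$, $s\ge 0$, and (C): $s\ge \sum_{t=1}^T\tilde h_t(x_t,z_t)-Q$. A KKT point of (P) consists of a feasible $(x^*,z^*,s^* )$ and nonnegative Lagrange multipliers for all constraints satisfying stationarity of the Lagrangian and complementary slackness; $\lambda^*$ denotes the multiplier of (C) (the shadow price of wireless data). For $\lambda\ge 0$ and $\beta>0$ write $a_t(\beta,\lambda)=\frac{1}{c_t}\,e_t'^{-1}\!\Big(\frac{p_tc_t+r_t\lambda}{\beta c_t}\Big)$ and $X_t(\lambda)=p_tc_t+(d_t+r_t)\lambda$. *)

(* Defs.v *)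
From Stdlib Require Import Reals.
From Coquelicot Require Import Coquelicot.
Open Scope R_scope.

(* Sum over t = 0 .. n-1 (periods 1..T are indexed 0..T-1). *)
Fixpoint sumT (f : nat -> R) (n : nat) : R :=
  match n with
  | O => 0
  | S k => sumT f k + f k
  end.

(* Standing assumptions on u_t : [0,oo) -> R with derivative up = u_t'
   on (0,oo) and upinv = (u_t')^{-1}. Values of u outside [0,oo) are irrelevant. *)
Definition u_regular (u up upinv : R -> R) : Prop :=
  (* continuous on [0,oo): at 0 from the right, elsewhere by differentiability *)
  filterlim u (at_right 0) (locally (u 0)) /\
  (forall x y, 0 <= x -> x <= y -> u x <= u y) /\
  (forall x y l, 0 <= x -> 0 <= y -> x <> y -> 0 < l < 1 ->
      l * u x + (1 - l) * u y < u (l * x + (1 - l) * y)) /\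
  (forall x, 0 < x -> derivable_pt_lim u x (up x)) /\
  (forall x, 0 < x -> 0 < up x) /\
  (forall x y, 0 < x -> x < y -> up y < up x) /\
  (forall y, 0 < y -> 0 < upinv y /\ up (upinv y) = y) /\
  (forall x, 0 < x -> upinv (up x) = x).

Definition deriv_nonneg (f : R -> R) (y l : R) : Prop :=
  filterlim (fun h => (f (y + h) - f y) / h)
    (within (fun h => h <> 0 /\ 0 <= y + h) (locally 0)) (locally l).

Definition e_regular (e ep epinv : R -> R) : Prop :=
  (forall x y, 0 <= x -> x <= y -> e x <= e y) /\
  (forall x y l, 0 <= x -> 0 <= y -> x <> y -> 0 < l < 1 ->
      e (l * x + (1 - l) * y) < l * e x + (1 - l) * e y) /\
  (forall y, 0 <= y -> deriv_nonneg e y (ep y)) /\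
  (forall y, 0 <= y ->
      filterlim ep (within (fun w => 0 <= w) (locally y)) (locally (ep y))) /\
  (forall x, 0 <= x -> 0 <= ep x) /\
  (forall x y, 0 <= x -> x < y -> ep x < ep y) /\
  (forall y, 0 <= y -> 0 <= epinv y /\ ep (epinv y) = y) /\
  (forall x, 0 <= x -> epinv (ep x) = x).

(* KKT point of problem (P) with multiplier lam for constraint (C).
   Multipliers: muz t for z_t >= 0, muxz t for x_t - z_t >= 0,
   nu t for 1 - x_t >= 0, sig for s >= 0.
   Stationarity is written as the vanishing of the partial derivatives of
   the Lagrangian
     sum_t f_t(x_t,z_t) - pi s + sum_t muz_t z_t + sum_t muxz_t (x_t - z_t)
       + sum_t nu_t (1 - x_t) + sig s + lam (s - sum_t h_t(x_t,z_t) + Q).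
   Since u_t' blows up at 0 (u_t' is onto (0,oo)), the Lagrangian is
   differentiable in x_t only when x_t > 0; this is part of stationarity. *)
Definition KKT_point (T : nat) (Q pi : R)
    (d r c p theta beta : nat -> R) (up ep : nat -> R -> R)
    (u e : nat -> R -> R)
    (x z : nat -> R) (s lam : R) : Prop :=
  (forall t, (t < T)%nat -> 0 <= z t /\ z t <= x t /\ x t <= 1) /\
  0 <= s /\
  s >= sumT (fun t => d t * x t + r t * z t) T - Q /\
  0 <= lam /\
  exists (muz muxz nu : nat -> R) (sig : R),
    0 <= sig /\
    (forall t, (t < T)%nat ->
       0 <= muz t /\ 0 <= muxz t /\ 0 <= nu t /\
       0 < x t /\
       theta t * up t (x t) - beta t * c t * ep t ((x t - z t) * c t)
         - lam * d t + muxz t - nu t = 0 /\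
       beta t * c t * ep t ((x t - z t) * c t) - p t * c t
         - lam * r t + muz t - muxz t = 0 /\
       muz t * z t = 0 /\ muxz t * (x t - z t) = 0 /\ nu t * (1 - x t) = 0) /\
    - pi + sig + lam = 0 /\
    sig * s = 0 /\
    lam * (s - sumT (fun t => d t * x t + r t * z t) T + Q) = 0.

Definition a_fun (c p r : R) (epinv : R -> R) (beta lam : R) : R :=
  / c * epinv ((p * c + r * lam) / (beta * c)).

Definition X_fun (c p d r : R) (lam : R) : R := p * c + (d + r) * lam.

Definition Omega3 (c p d r : R) (up epinv : R -> R) (lam beta theta : R) : Prop :=
  0 < beta /\
  X_fun c p d r lam / up (a_fun c p r epinv beta lam) <= theta /\
  theta <= X_fun c p d r lam / up 1.

Definition x3 (c p d r theta : R) (upinv : R -> R) (lam : R) : R :=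
  upinv (X_fun c p d r lam / theta).

Definition z3 (c p d r theta beta : R) (upinv epinv : R -> R) (lam : R) : R :=
  x3 c p d r theta upinv lam - a_fun c p r epinv beta lam.

(* Main.v *)
Require Import Defs.
From Stdlib Require Import Reals Lra Psatz.
From Coquelicot Require Import Coquelicot.
Open Scope R_scope.

Lemma mono_rev (f : R -> R) (a b : R) :
  (forall x y, 0 <= x -> x < y -> f x < f y) -> 0 <= a -> 0 <= b ->
  f a < f b -> a < b.
Proof.
  intros Hm Ha Hb H. destruct (Rlt_or_le a b) as [h|h]; auto.
  destruct (Rle_lt_or_eq_dec b a h) as [h'|h'].
  - pose proof (Hm b a Hb h'). lra.
  - subst. lra.
Qed.

Theorem lemma3 (T : nat) (Q pi : R)
    (d r c p theta beta : nat -> R)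
    (u e up upinv ep epinv : nat -> R -> R)
    (x z : nat -> R) (s lam : R) :
  (1 <= T)%nat ->
  0 < Q -> 0 < pi ->
  (forall t, (t < T)%nat ->
     0 <= d t /\ 0 <= r t /\ 0 < c t /\ 0 < p t /\ 0 < theta t /\ 0 < beta t /\
     u_regular (u t) (up t) (upinv t) /\
     e_regular (e t) (ep t) (epinv t)) ->
  KKT_point T Q pi d r c p theta beta up ep u e x z s lam ->
  forall t, (t < T)%nat ->
    Omega3 (c t) (p t) (d t) (r t) (up t) (epinv t) lam (beta t) (theta t) ->
    x t = x3 (c t) (p t) (d t) (r t) (theta t) (upinv t) lam /\
    z t = z3 (c t) (p t) (d t) (r t) (theta t) (beta t) (upinv t) (epinv t) lam.
Proof.
  intros HT HQ Hpi Hpar HK t Ht HO.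
  destruct (Hpar t Ht) as (Hd & Hr & Hc & Hp & Hth & Hb & Hu & He).
  destruct Hu as (_ & _ & _ & _ & Hup & Hupdec & Hupinv & Hupinv2).
  destruct He as (_ & _ & _ & _ & Hep0 & Hepinc & Hepinv & Hepinv2).
  destruct HK as (Hfeas & _ & _ & Hlam & muz & muxz & nu & sig & _ & Hst & _).
  destruct (Hfeas t Ht) as (Hz0 & Hzx & Hx1).
  destruct (Hst t Ht) as (Hmz & Hmxz & Hnu & Hx0 & E1 & E2 & C1 & C2 & C3).
  destruct HO as (_ & HO1 & HO2).
  unfold x3, z3, a_fun, X_fun in *.
  set (K := (p t * c t + r t * lam) / (beta t * c t)) in *.
  set (X := p t * c t + (d t + r t) * lam) in *.
  assert (HX : 0 < X) by (unfold X; nra).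
  assert (HK : 0 < K) by (unfold K; apply Rdiv_lt_0_compat; nra).
  assert (Hbc : beta t * c t * K = p t * c t + r t * lam)
    by (unfold K; field; lra).
  assert (Hep00 : ep t 0 = 0).
  { destruct (Hepinv 0 (Rle_refl 0)) as [hw ew].
    destruct (Rle_lt_or_eq_dec 0 _ hw) as [h|h].
    - pose proof (Hepinc 0 _ (Rle_refl 0) h). pose proof (Hep0 0 (Rle_refl 0)). lra.
    - rewrite h at 1. exact ew. }
  set (w := epinv t K) in *.
  destruct (Hepinv K (Rlt_le _ _ HK)) as [hw ew]. fold w in hw, ew.
  assert (Hw : 0 < w).
  { destruct (Rle_lt_or_eq_dec 0 _ hw) as [h|h]; auto.
    rewrite <- h in ew. lra. }
  set (a := / c t * w) in *.
  assert (Ha : 0 < a) by (unfold a; apply Rmult_lt_0_compat; auto; apply Rinv_0_lt_compat; lra).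
  assert (Hwa : w = a * c t) by (unfold a; field; lra).
  pose proof (Hup a Ha) as Hua.
  pose proof (Hup 1 Rlt_0_1) as Hu1.
  assert (O1 : X <= theta t * up t a).
  { apply (Rmult_le_compat_r (up t a)) in HO1; [|lra].
    replace (X / up t a * up t a) with X in HO1 by (field; lra). lra. }
  assert (O2 : theta t * up t 1 <= X).
  { apply (Rmult_le_compat_r (up t 1)) in HO2; [|lra].
    replace (X / up t 1 * up t 1) with X in HO2 by (field; lra). lra. }
  assert (Hsum : theta t * up t (x t) = X - muz t + nu t) by (unfold X; lra).
  assert (Hnu0 : nu t = 0).
  { destruct (Rle_lt_or_eq_dec 0 _ Hnu) as [hn|hn]; [|auto]. exfalso.
    assert (hx : x t = 1).
    { destruct (Rmult_integral _ _ C3) as [h|h]; lra. }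
    destruct (Rle_lt_or_eq_dec 0 _ Hmz) as [hm|hm].
    - assert (hz : z t = 0).
      { destruct (Rmult_integral _ _ C1) as [h|h]; lra. }
      assert (hmx : muxz t = 0).
      { destruct (Rmult_integral _ _ C2) as [h|h]; lra. }
      rewrite hx, hz, hmx in E2.
      assert (hlt : ep t ((1 - 0) * c t) < ep t w).
      { rewrite ew. apply (Rmult_lt_reg_l (beta t * c t)); [nra|]. lra. }
      apply mono_rev in hlt; auto; try lra.
      assert (1 < a) by nra.
      pose proof (Hupdec 1 a Rlt_0_1 H). nra.
    - rewrite <- hm in Hsum. rewrite hx in Hsum. lra. }
  assert (Hmz0 : muz t = 0).
  { destruct (Rle_lt_or_eq_dec 0 _ Hmz) as [hm|hm]; [|auto]. exfalso.
    assert (hz : z t = 0).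
    { destruct (Rmult_integral _ _ C1) as [h|h]; lra. }
    assert (hmx : muxz t = 0).
    { destruct (Rmult_integral _ _ C2) as [h|h]; lra. }
    rewrite hz, hmx in E2.
    assert (hlt : ep t ((x t - 0) * c t) < ep t w).
    { rewrite ew. apply (Rmult_lt_reg_l (beta t * c t)); [nra|]. lra. }
    apply mono_rev in hlt; auto; try nra.
    assert (x t < a) by nra.
    pose proof (Hupdec (x t) a Hx0 H). nra. }
  assert (Hmxz0 : muxz t = 0).
  { destruct (Rle_lt_or_eq_dec 0 _ Hmxz) as [hm|hm]; [|auto]. exfalso.
    assert (hy : x t - z t = 0).
    { destruct (Rmult_integral _ _ C2) as [h|h]; lra. }
    rewrite hy in E2. rewrite Rmult_0_l, Hep00 in E2. nra. }
  assert (Hx : up t (x t) = X / theta t).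
  { apply (Rmult_eq_reg_l (theta t)); [|lra]. rewrite Hsum, Hnu0, Hmz0. field. lra. }
  assert (Hxe : x t = upinv t (X / theta t)).
  { rewrite <- Hx. symmetry. apply Hupinv2; auto. }
  split; [exact Hxe|].
  assert (Hy : ep t ((x t - z t) * c t) = K).
  { apply (Rmult_eq_reg_l (beta t * c t)); [|nra]. rewrite Hbc. lra. }
  assert (Hy2 : (x t - z t) * c t = w).
  { unfold w. rewrite <- Hy. symmetry. apply Hepinv2. nra. }
  assert (x t - z t = a) by (rewrite Hwa in Hy2; nra).
  unfold x3, X_fun. fold X. rewrite <- Hxe. lra.
Qed.
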